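(* Let $N$ be a simply connected nilpotent Lie group, $M$ a connected closed normal subgroup of $N$ with Haar measure $vol_M$, and $(D_t)_{t>0}$ a nicely growing family of subsets of $N$. For $g\in N$ let $\mu_t^g$ be the probability measure on $N$ given by $\mu_t^g(dy)=\frac{1_{g^{-1}D_t\cap M}(y)}{vol_M(g^{-1}D_t\cap M)}vol_M(dy)$. Then for every $h\in M$, $$\lim_{t\to+\infty}\|\delta_h*\mu_t^g-\mu_t^g\|=0$$ uniformly for $g$ in compact subsets of $N$, where $\|\cdot\|$ is the total variation norm and $\delta_h$ the Dirac mass at $h$.
   Context: Identify $N$ with its Lie algebra $\mathfrak n$ via $\exp$; let $C^p(\mathfrak n)$ be the descending central series and, for a connected subgroup $H$, $\deg_N(H)=\sum_{j\ge1}\dim(\mathrm{Lie}(H)\cap C^j(\mathfrak n))$. A family $(D_t)_{t>0}$ of measurable subsets of $N$ is nicely growing if: (i) $D_t\subseteq D_s$ for $t\le s$ and $\bigcup D_t=N$; (ii) for every compact $K$ there is $\varepsilon_t>0$, $\varepsilon_t\to0$, with $D_{t(1-\varepsilon_t)}\subseteq KD_tK\subseteq D_{t(1+\varepsilon_t)}$ for large $t$; (iii) for every connected subgroup $H$ of $N$ with Haar measure $vol_H$, $\lim_t vol_H(D_t\cap H)/t^{\deg_N(H)}=C(H)>0$; (iv) there is $\alpha>1$ with $D_tD_t^{-1}\subseteq D_{\alpha t}$ for $t>1$. *)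

(* Defs.v *)
From HB Require Import structures.
From mathcomp Require Import all_boot all_order all_algebra.
From mathcomp Require Import all_classical all_reals all_analysis.
Set Implicit Arguments. Unset Strict Implicit. Unset Printing Implicit Defensive.
Import Order.TTheory GRing.Theory Num.Theory.
Import numFieldNormedType.Exports.
Local Open Scope classical_set_scope.
Local Open Scope ring_scope.

(* Model: every simply connected nilpotent Lie group is isomorphic to
   exp(n) for n a Lie subalgebra of strictly upper triangular real k x k
   matrices (Ado/Birkhoff + Engel), with matrix product as group law. *)

Section Defs.
Variables (R : realType) (k : nat).

Definition Mx := g_sigma_algebraType (open : set (set 'M[R]_k)).

Definition strictly_upper (X : 'M[R]_k) : Prop :=
  forall i j : 'I_k, (j <= i)%N -> X i j = 0.

Definition bracket (X Y : 'M[R]_k) : 'M[R]_k := X *m Y - Y *m X.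

Definition lie_subalg (V : {vspace 'M[R]_k}) : Prop :=
  forall X Y, X \in V -> Y \in V -> bracket X Y \in V.

Definition nil_lie_alg (n : {vspace 'M[R]_k}) : Prop :=
  lie_subalg n /\ forall X, X \in n -> strictly_upper X.

Definition lie_ideal (n m : {vspace 'M[R]_k}) : Prop :=
  (m <= n)%VS /\ forall X Y, X \in n -> Y \in m -> bracket X Y \in m.

Definition mxpow (X : 'M[R]_k) (i : nat) : 'M[R]_k := iter i (mulmx X) 1%:M.

(* matrix exponential; exact for strictly upper triangular X (X^k = 0) *)
Definition mexp (X : 'M[R]_k) : 'M[R]_k :=
  \sum_(i < k) (i`!%:R)^-1 *: mxpow X i.

Definition grp (V : {vspace 'M[R]_k}) : set Mx :=
  [set mexp X | X in [set X | X \in V]].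

Definition brk (V W : {vspace 'M[R]_k}) : {vspace 'M[R]_k} :=
  (<<[seq bracket X Y | X <- vbasis V, Y <- vbasis W]>>)%VS.

(* lcs n i = C^{i+1}(n), descending central series: C^1 = n, C^{j+1}=[n,C^j] *)
Fixpoint lcs (n : {vspace 'M[R]_k}) (i : nat) : {vspace 'M[R]_k} :=
  if i is i'.+1 then brk n (lcs n i') else n.

(* deg_N(H) = sum_{j>=1} dim(Lie(H) ∩ C^j(n)); the terms with j > k vanish
   since C^j(n) = 0 for j >= k (strictly upper triangular matrices). *)
Definition degN (n h : {vspace 'M[R]_k}) : nat :=
  (\sum_(i < k) \dim (h :&: lcs n i))%N.

(* nu is a Haar measure of the closed subgroup G, viewed as a Borel measure
   on the ambient space concentrated on G: left invariant under G, finite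
   on compacts, positive on nonempty relatively open subsets of G. *)
Definition haar (G : set Mx) (nu : {measure set Mx -> \bar R}) : Prop :=
  [/\ nu (~` G) = 0%E,
      (forall g (A : set Mx), G g -> measurable A ->
          nu [set g *m x | x in A] = nu A),
      (forall K : set 'M[R]_k, compact K -> (nu K < +oo)%E) &
      (forall U : set 'M[R]_k, open U -> U `&` G !=set0 ->
          (0 < nu (U `&` G))%E)].

Definition KDK (K D : set Mx) : set Mx :=
  [set z | exists a x b, [/\ K a, D x, K b & z = a *m x *m b]].

Definition ng_i (n : {vspace 'M[R]_k}) (D : R -> set Mx) : Prop :=
  [/\ (forall t, 0 < t -> measurable (D t) /\ D t `<=` grp n),
      (forall t s, 0 < t -> t <= s -> D t `<=` D s) &
      \bigcup_(t in [set t : R | 0 < t]) D t = grp n].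

Definition ng_ii (n : {vspace 'M[R]_k}) (D : R -> set Mx) : Prop :=
  forall K : set 'M[R]_k, compact K -> K !=set0 -> K `<=` grp n ->
    exists eps : R -> R, [/\ (forall t, 0 < eps t),
      (eps @ +oo --> 0) &
      (\forall t \near +oo,
         D (t * (1 - eps t)) `<=` KDK K (D t) /\
         KDK K (D t) `<=` D (t * (1 + eps t)))].

(* (iii) connected subgroups H of N are exactly exp(h) for Lie subalgebras
   h of n, with Lie(H) = h *)
Definition ng_iii (n : {vspace 'M[R]_k}) (D : R -> set Mx) : Prop :=
  forall h : {vspace 'M[R]_k}, lie_subalg h -> (h <= n)%VS ->
    forall nu, haar (grp h) nu ->
    exists C : R, 0 < C /\
      ((fun t : R => (nu (D t `&` grp h) * ((t ^+ degN n h)^-1)%:E)%E)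
         @ +oo --> C%:E).

Definition ng_iv (D : R -> set Mx) : Prop :=
  exists alpha : R, 1 < alpha /\ forall t, 1 < t ->
    [set x *m invmx y | x in D t & y in D t] `<=` D (alpha * t).

Definition nicely_growing (n : {vspace 'M[R]_k}) (D : R -> set Mx) : Prop :=
  [/\ ng_i n D, ng_ii n D, ng_iii n D & ng_iv D].

Definition normalized (vol : {measure set Mx -> \bar R}) (S : set Mx)
  (A : set Mx) : \bar R :=
  (vol (A `&` S) * ((fine (vol S))^-1)%:E)%E.

Definition dirac_conv (h : Mx) (mu : set Mx -> \bar R) (A : set Mx) : \bar R :=
  mu [set y | A (h *m y)].

Definition tv_dist (mu1 mu2 : set Mx -> \bar R) : \bar R :=
  ereal_sup [set x | exists (p : nat) (F : nat -> set Mx),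
     [/\ (forall i, measurable (F i)),
        trivIset [set i | (i < p)%N] F,
        \bigcup_(i in [set i | (i < p)%N]) F i = setT &
        x = (\sum_(i < p) `|mu1 (F i) - mu2 (F i)|)%E]].

End Defs.

(* Main.v *)
Require Import Defs.
From HB Require Import structures.
From mathcomp Require Import all_boot all_order all_algebra.
From mathcomp Require Import all_classical all_reals all_analysis.
From mathcomp Require Import perm.
From mathcomp Require Import ring lra.
Set Implicit Arguments. Unset Strict Implicit. Unset Printing Implicit Defensive.
Import Order.TTheory GRing.Theory Num.Theory.
Import numFieldNormedType.Exports.
Local Open Scope classical_set_scope.
Local Open Scope ring_scope.

Section Alg.
Variables (R : realType) (k : nat).
Local Notation M := 'M[R]_k.

Lemma su_mul (A B : M) : strictly_upper A -> strictly_upper B ->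
  strictly_upper (A *m B).
Proof.
move=> hA hB i j ji; rewrite mxE big1 // => l _.
case: (ltnP i l) => [il|li]; last by rewrite hA // mul0r.
by rewrite hB ?mulr0 //; apply: leq_trans ji (ltnW il).
Qed.

Lemma su_pow (X : M) i : strictly_upper X -> strictly_upper (mxpow X i.+1).
Proof.
move=> hX; elim: i => [|i IH]; first by rewrite /mxpow /= mulmx1.
by rewrite /mxpow iterS; apply: su_mul.
Qed.

Lemma mexp_low (X : M) (i j : 'I_k) : strictly_upper X -> (j <= i)%N ->
  mexp X i j = (i == j)%:R.
Proof.
move=> hX ji; rewrite /mexp summxE.
have k0 : (0 < k)%N by apply: leq_ltn_trans (ltn_ord i).
rewrite (bigD1 (Ordinal k0)) //= big1 ?addr0; last first.
  move=> [[|l] hl] //= _; by rewrite mxE su_pow // mulr0.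
by rewrite mxE /mxpow /= mxE invr1 mul1r.
Qed.

Lemma mexp_det (X : M) : strictly_upper X -> \det (mexp X) = 1.
Proof.
move=> hX; rewrite -det_tr det_trig.
  by rewrite big1 // => i _; rewrite mxE mexp_low // eqxx.
apply/is_trig_mxP => i j ij; rewrite mxE mexp_low ?(ltnW ij) //.
by move: ij; case: (j =P i) => [->|]; rewrite ?ltnn.

Qed.

Lemma mexp_unit (X : M) : strictly_upper X -> mexp X \in unitmx.
Proof. by move=> hX; rewrite unitmxE mexp_det // unitr1. Qed.

Lemma mexp_inv (X : M) : strictly_upper X -> invmx (mexp X) = \adj (mexp X).
Proof. by move=> hX; rewrite /invmx mexp_unit // mexp_det // invr1 scale1r. Qed.

Lemma mexp0 : mexp (0 : M) = 1%:M.
Proof.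
rewrite /mexp; case: (posnP k) => [k0|k0].
  by apply/matrixP => i; move: (ltn_ord i); rewrite {2}k0.
rewrite (bigD1 (Ordinal k0)) //= big1 ?addr0.
  by rewrite /mxpow /= invr1 scale1r.
by move=> [[|l] hl] //= _; rewrite /mxpow /= mul0mx scaler0.
Qed.

End Alg.


Section Top.
Variables (R : realType).
Lemma mx_cont (T : topologicalType) m n (f : T -> 'M[R]_(m,n)) :
  (forall i j, continuous (fun x => f x i j)) -> continuous f.
Proof.
move=> hf x; apply/cvg_mx_entourageP => A eA.
apply: filter_forall => i; apply: filter_forall => j.
have := hf i j x; move/cvg_entourageP => /(_ A eA).
by move=> h; near=> y; rewrite inE; near: y.
Unshelve. all: by end_near.
Qed.

Variable (T : topologicalType).

Lemma cont_sum (I : Type) (s : seq I) (P : pred I) (F : I -> T -> R) :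
  (forall i, continuous (F i)) -> continuous (fun x => \sum_(i <- s | P i) F i x).
Proof.
move=> hF; elim: s => [|a s IH].
  have -> : (fun x => \sum_(i <- [::] | P i) F i x) = (fun _ => 0).
    by apply/funext => x; rewrite big_nil.
  by move=> x; apply: cst_continuous.
have -> : (fun x => \sum_(i <- a :: s | P i) F i x) =
  (fun x => (if P a then F a x else 0) + \sum_(i <- s | P i) F i x).
  by apply/funext => x; rewrite big_cons; case: (P a); rewrite ?add0r.
move=> x; apply: continuousD; last exact: IH.
by case: (P a); [exact: hF | exact: cst_continuous].
Qed.

Lemma cont_prod (I : Type) (s : seq I) (P : pred I) (F : I -> T -> R) :
  (forall i, continuous (F i)) -> continuous (fun x => \prod_(i <- s | P i) F i x).
Proof.
move=> hF; elim: s => [|a s IH].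
  have -> : (fun x => \prod_(i <- [::] | P i) F i x) = (fun _ => 1).
    by apply/funext => x; rewrite big_nil.
  by move=> x; apply: cst_continuous.
have -> : (fun x => \prod_(i <- a :: s | P i) F i x) =
  (fun x => (if P a then F a x else 1) * \prod_(i <- s | P i) F i x).
  by apply/funext => x; rewrite big_cons; case: (P a); rewrite ?mul1r.
move=> x; apply: continuousM; last exact: IH.
by case: (P a); [exact: hF | exact: cst_continuous].
Qed.

Definition ec m n (f : T -> 'M[R]_(m,n)) := forall i j, continuous (fun x => f x i j).

Lemma ec_cst m n (A : 'M[R]_(m,n)) : ec (fun _ => A).
Proof. by move=> i j x; apply: cst_continuous. Qed.

Lemma ec_mul m n p (f : T -> 'M[R]_(m,n)) (g : T -> 'M[R]_(n,p)) :
  ec f -> ec g -> ec (fun x => f x *m g x).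
Proof.
move=> hf hg i j.
have -> : (fun x => (f x *m g x) i j) = (fun x => \sum_l f x i l * g x l j).
  by apply/funext => x; rewrite mxE.
by apply: cont_sum => l x; exact: (continuousM (hf i l x) (hg l j x)).
Qed.

Lemma ec_add m n (f g : T -> 'M[R]_(m,n)) : ec f -> ec g -> ec (fun x => f x + g x).
Proof.
move=> hf hg i j.
have -> : (fun x => (f x + g x) i j) = (fun x => f x i j + g x i j).
  by apply/funext => x; rewrite mxE.
by move=> x; exact: (continuousD (hf i j x) (hg i j x)).
Qed.

Lemma ec_scale m n (c : R) (f : T -> 'M[R]_(m,n)) : ec f -> ec (fun x => c *: f x).
Proof.
move=> hf i j.
have -> : (fun x => (c *: f x) i j) = (fun x => c * f x i j).
  by apply/funext => x; rewrite mxE.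
by move=> x; exact: (continuousM (@cst_continuous T R c x) (hf i j x)).
Qed.

Lemma ec_sum m n p (F : 'I_p -> T -> 'M[R]_(m,n)) :
  (forall l, ec (F l)) -> ec (fun x => \sum_l F l x).
Proof.
move=> hF i j.
have -> : (fun x => (\sum_l F l x) i j) = (fun x => \sum_l F l x i j).
  by apply/funext => x; rewrite summxE.
by apply: cont_sum => l; apply: hF.
Qed.

Lemma cont_det n (f : T -> 'M[R]_n) : ec f -> continuous (fun x => \det (f x)).
Proof.
move=> hf; rewrite /determinant; apply: cont_sum => s x.
apply: (continuousM (@cst_continuous T R _ x)). have := (@cont_prod _ (index_enum (ordinal n)) xpredT (fun (i : ordinal n) (x : T) => f x i (s i)) (fun i => hf i (s i)) x). exact.
Qed.

Lemma ec_adj n (f : T -> 'M[R]_n) : ec f -> ec (fun x => \adj (f x)).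
Proof.
move=> hf i j.
have -> : (fun x => \adj (f x) i j) =
   (fun x => (-1) ^+ (j + i) * \det (row' j (col' i (f x)))).
  by apply/funext => x; rewrite mxE.
have hd : continuous (fun x => \det (row' j (col' i (f x)))).
  apply: cont_det => a b.
  have -> : (fun x => row' j (col' i (f x)) a b) = (fun x => f x (lift j a) (lift i b)).
    by apply/funext => z; rewrite !mxE.
  by apply: hf.
by move=> x; exact: (continuousM (@cst_continuous T R _ x) (hd x)).
Qed.

Lemma ec_cont m n (f : T -> 'M[R]_(m,n)) : ec f -> continuous f.
Proof. exact: mx_cont. Qed.
End Top.

Lemma ec_id (R : realType) m n : ec (fun x : 'M[R]_(m,n) => x).
Proof. by move=> i j; apply: coord_continuous. Qed.


Section Meas.
Variables (R : realType) (k : nat).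
Local Notation M := 'M[R]_k.
Local Notation X := (Mx R k).

Lemma open_meas (A : set X) : open (A : set M) -> measurable A.
Proof. by move=> oA; apply: sub_sigma_algebra. Qed.

Lemma closed_meas (A : set X) : closed (A : set M) -> measurable A.
Proof.
move=> cA; rewrite -[A]setCK; apply: measurableC; apply: open_meas.
exact: closed_openC.
Qed.

Lemma preim_meas (f : M -> M) (A : set X) : continuous f -> measurable A ->
  measurable ((f : X -> X) @^-1` A).
Proof.
move=> cf mA.
have mf : measurable_fun (setT : set X) (f : X -> X).
  apply: (@measurability _ _ X X setT (f : X -> X) open) => //.
  move=> _ [B oB <-]; apply: measurableI => //; apply: open_meas.
  by apply: open_comp => // x _; apply: cf.
by have := mf measurableT _ mA; rewrite setTI.
Qed.

Lemma ec_mxpow i : ec (fun x : M => mxpow x i).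
Proof.
elim: i => [|i IH]; first exact: ec_cst.
change (ec (fun x : M => x *m mxpow x i)); exact: (ec_mul (@ec_id R k k) IH).
Qed.

Lemma ec_mexp : ec (fun x : M => mexp x).
Proof. by apply: ec_sum => i; apply: ec_scale; apply: ec_mxpow. Qed.

Lemma grp_meas (m : {vspace M}) : measurable (grp m : set X).
Proof.
pose r := \dim m; pose b := vbasis m.
pose L := fun c : 'rV[R]_r => \sum_(i < r) c ord0 i *: b`_i.
have cL : continuous L.
  apply: ec_cont; apply: ec_sum => i a j.
  have -> : (fun c : 'rV[R]_r => (c ord0 i *: b`_i) a j) = (fun c => c ord0 i * b`_i a j).
    by apply/funext => c; rewrite mxE.
  move=> c; apply: continuousM; [exact: coord_continuous | exact: cst_continuous].
pose B := fun j : nat => [set c : 'rV[R]_r | forall i, `[- j%:R, j%:R]%classic (c ord0 i)].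
pose E := fun j => ((@mexp R k) \o L) @` B j.
have -> : grp m = \bigcup_j E j.
  apply/seteqP; split.
    move=> _ [x /= xm <-].
    pose c := \row_(i < r) coord b i x.
    have [j hj] : exists j : nat, forall i, `|c ord0 i| <= j%:R.
      exists (\sum_(i < r) Num.truncn `|c ord0 i|).+1 => i.
      by rewrite (le_trans (ltW (truncnS_gt _))) // ler_nat ltnS (bigD1 i) //= leq_addr.
    exists j => //; exists c.
      move=> i /=; rewrite in_itv /= -ler_norml; exact: hj.
    by rewrite /= /L (coord_vbasis xm); congr mexp; apply: eq_bigr => i _; rewrite mxE.
  move=> _ [j _ [c _ <-]]; exists (L c) => //=.
  rewrite /L; apply: memv_suml => i _; apply: memvZ; apply: vbasis_mem.
  by apply: mem_nth; rewrite size_tuple.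
apply: bigcupT_measurable => j; apply: closed_meas.
apply: compact_closed; first exact: norm_hausdorff.
apply: continuous_compact; first apply: continuous_subspaceT.
  by move=> x; apply: continuous_comp; [apply: cL | apply: ec_cont; apply: ec_mexp].
have H1 := (@rV_compact R r (fun _ => `[- j%:R, j%:R]%classic) (fun _ => @segment_compact R (- j%:R) j%:R)). exact: H1.
Qed.
End Meas.


Section TV.
Variables (R : realType) (k : nat).
Local Notation M := 'M[R]_k.
Local Notation X := (Mx R k).
Variable mu : {measure set X -> \bar R}.

Lemma part_sum p (F : nat -> set X) (A : set X) : (forall i, measurable (F i)) ->
  trivIset `I_p F -> \bigcup_(i in `I_p) F i = setT -> measurable A ->
  (\sum_(i < p) mu (F i `&` A) = mu A)%E.
Proof.
move=> mF tF FU mA.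
have E : \big[setU/set0]_(i < p) (F i `&` A) = A.
  by rewrite -(bigcup_mkord p (fun i => F i `&` A)) -setI_bigcupl FU setTI.
rewrite -[in RHS]E (@measure_semi_additive_ord_I _ _ _ mu (fun i => F i `&` A)) //.
- by move=> i _; apply: measurableI.
- exact: trivIset_setIr.
- by rewrite E.
Qed.

Lemma fin_sub (B Z : set X) : measurable B -> measurable Z -> B `<=` Z ->
  (mu Z < +oo)%E -> mu B = (fine (mu B))%:E.
Proof.
move=> mB mZ BZ Zf; rewrite fineK // ge0_fin_numE //.
by apply: le_lt_trans Zf; apply: le_measure; rewrite ?inE.
Qed.

Lemma img_pre (h : M) (A : set X) : h \in unitmx ->
  [set h *m x | x in A] = ((fun y : M => invmx h *m y) : X -> X) @^-1` A.
Proof.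
move=> hu; apply/seteqP; split.
  by move=> _ [x Ax <-]; rewrite /= mulKmx.
by move=> y /= Ay; exists (invmx h *m y) => //; rewrite mulKVmx.
Qed.

Lemma cont_lmul (g : M) : continuous (fun y : M => g *m y).
Proof. by apply: ec_cont; apply: ec_mul; [apply: ec_cst | apply: ec_id]. Qed.

Lemma img_meas (h : M) (A : set X) : h \in unitmx -> measurable A ->
  measurable ([set h *m x | x in A] : set X).
Proof. by move=> hu mA; rewrite img_pre //; apply: preim_meas => //; apply: cont_lmul. Qed.

Lemma lmul_meas (h : M) (A : set X) : measurable A ->
  measurable [set y : X | A (h *m y)].
Proof. move=> mA; have H1 := preim_meas (@cont_lmul h) mA; exact: H1. Qed.

Lemma tv_bound (h : M) (S S' : set X) : h \in unitmx ->
  (forall A : set X, measurable A -> mu ([set h *m x | x in A] : set X) = mu A) ->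
  measurable S -> measurable S' -> (0 < mu S)%E -> (mu S' < +oo)%E -> S `<=` S' ->
  mu (([set h *m x | x in S] : set X) `\` S') = 0%E ->
  (tv_dist (dirac_conv h (normalized mu S)) (normalized mu S) <=
     (2 * (fine (mu S') - fine (mu S)) / fine (mu S))%:E)%E.
Proof.
move=> hu hinv mS mS' S0 S'f SS' hS0.
set hS := ([set h *m x | x in S] : set X).
have mhS : measurable hS by apply: img_meas.
have Sf : (mu S < +oo)%E.
  by apply: le_lt_trans S'f; apply: le_measure; rewrite ?inE.
have hSS : mu hS = mu S by apply: hinv.
have hSf : (mu hS < +oo)%E by rewrite hSS.
set a := fine (mu S).
have a0 : 0 < a by rewrite /a fine_gt0 // S0 Sf.
have mhSS : measurable (hS `\` S) by apply: measurableD.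
have mShS : measurable (S `\` hS) by apply: measurableD.
have mSI : measurable (S `&` hS) by apply: measurableI.
set A1 := fine (mu (hS `\` S)).
set B1 := fine (mu (S `\` hS)).
have eA1 : mu (hS `\` S) = A1%:E by apply: (fin_sub mhSS mhS) => // x [].
have eB1 : mu (S `\` hS) = B1%:E by apply: (fin_sub mShS mS) => // x [].
have eC : mu (S `&` hS) = (fine (mu (S `&` hS)))%:E by apply: (fin_sub mSI mS) => // x [].
have eAB : A1 = B1.
  have e1 : mu hS = (mu (hS `\` S) + mu (hS `&` S))%E := measureDI mu mhS mS.
  have e2 : mu S = (mu (S `\` hS) + mu (S `&` hS))%E := measureDI mu mS mhS.
  rewrite hSS e2 eA1 eB1 (setIC hS S) eC -!EFinD in e1.
  by move: e1 => [] /addIr.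
have A1le : A1 <= fine (mu S') - a.
  have mS'S : measurable (S' `\` S) by apply: measurableD.
  have mhS' : measurable (hS `\` S') by apply: measurableD.
  have : (mu (hS `\` S) <= mu (S' `\` S))%E.
    apply: (le_trans (y := mu ((hS `\` S') `|` (S' `\` S)))).
      apply: le_measure; rewrite ?inE //; first by apply: measurableU.
      by move=> x [hx nSx]; case: (pselect (S' x)) => ?; [right|left].
    have hh : (mu ((hS `\` S') `|` (S' `\` S)) <= mu (hS `\` S') + mu (S' `\` S))%E :=
      measureU2 mu mhS' mS'S.
    by rewrite hS0 add0e in hh.
  move=> hh; have e3 : mu (S' `\` S) = (mu S' - mu (S' `&` S))%E := measureD mS' mS S'f.
  rewrite e3 (setIC S' S) (setIidl SS') eA1 in hh; move: hh.
  rewrite -(fineK (x := mu S')) ?ge0_fin_numE // -(fineK (x := mu S)) ?ge0_fin_numE //.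
apply: ge_ereal_sup => _ [p [F [mF tF FU ->]]].
pose al i := fine (mu (F i `&` (hS `\` S))).
pose be i := fine (mu (F i `&` (S `\` hS))).
pose ga i := fine (mu (F i `&` (S `&` hS))).
have key : forall i, (`|dirac_conv h (normalized mu S) (F i) - normalized mu S (F i)| =
    (`|al i - be i| / a)%:E)%E.
  move=> i; rewrite /dirac_conv /normalized.
  have -> : mu ([set y | F i (h *m y)] `&` S) = mu (F i `&` hS).
    rewrite -hinv; last by apply: measurableI => //; apply: lmul_meas.
    congr (mu _); apply/seteqP; split.
      by move=> _ [x [Fx Sx] <-]; split => //; exists x.
    by move=> z [Fz [x Sx hx]]; exists x; rewrite /= ?hx //.
  have mFi := mF i.
  have eal : mu (F i `&` (hS `\` S)) = (al i)%:E.
    by apply: (fin_sub _ mhS) => //; [exact: measurableI | move=> x [_ []]].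
  have ebe : mu (F i `&` (S `\` hS)) = (be i)%:E.
    by apply: (fin_sub _ mS) => //; [exact: measurableI | move=> x [_ []]].
  have ega : mu (F i `&` (S `&` hS)) = (ga i)%:E.
    by apply: (fin_sub _ mS) => //; [exact: measurableI | move=> x [_ []]].
  have -> : mu (F i `&` hS) = ((al i) + (ga i))%:E.
    have e : mu (F i `&` hS) = (mu ((F i `&` hS) `\` S) + mu ((F i `&` hS) `&` S))%E.
      by apply: measureDI => //; exact: measurableI.
    by rewrite e -setIDA -setIA (setIC hS S) eal ega.
  have -> : mu (F i `&` S) = ((be i) + (ga i))%:E.
    have e : mu (F i `&` S) = (mu ((F i `&` S) `\` hS) + mu ((F i `&` S) `&` hS))%E.
      by apply: measureDI => //; exact: measurableI.
    by rewrite e -setIDA -setIA ebe ega.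
  rewrite -/a -!EFinM -EFinB abse_EFin; congr (_%:E).
  rewrite -mulrBl normrM (ger0_norm (_ : 0 <= a^-1)) ?invr_ge0 ?(ltW a0) //.
  by congr (`|_| * _); lra.
have al0 : forall i, 0 <= al i by move=> i; apply: fine_ge0.
have be0 : forall i, 0 <= be i by move=> i; apply: fine_ge0.
have sal : \sum_(i < p) al i = A1.
  apply: EFin_inj; rewrite -sumEFin -eA1 -(part_sum mF tF FU mhSS).
  apply: eq_bigr => i _; rewrite fineK // ge0_fin_numE //.
  apply: le_lt_trans hSf; apply: le_measure; rewrite ?inE //.
    by apply: measurableI.
  by move=> x [_ []].
have sbe : \sum_(i < p) be i = B1.
  apply: EFin_inj; rewrite -sumEFin -eB1 -(part_sum mF tF FU mShS).
  apply: eq_bigr => i _; rewrite fineK // ge0_fin_numE //.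
  apply: le_lt_trans Sf; apply: le_measure; rewrite ?inE //.
    by apply: measurableI.
  by move=> x [_ []].
under eq_bigr => i _ do rewrite key.
rewrite sumEFin lee_fin.
apply: (le_trans (y := \sum_(i < p) (al i + be i) / a)).
  apply: ler_sum => i _; apply: ler_wpM2r; first by rewrite invr_ge0 ltW.
  apply: (le_trans (ler_normB _ _)).
  by rewrite !ger0_norm.
rewrite -mulr_suml big_split /= sal sbe -eAB.
apply: ler_wpM2r; first by rewrite invr_ge0 ltW.
by move: A1le; lra.
Qed.
End TV.


Section Main.
Variables (R : realType) (k : nat).
Local Notation M := 'M[R]_k.
Local Notation X := (Mx R k).

Lemma near_ex (P : R -> Prop) : (\forall t \near +oo, P t) ->
  exists M0 : R, forall t, M0 < t -> P t.
Proof. by case=> M0 [_ hM]; exists M0. Qed.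

Lemma choose_r (N : nat) (e : R) : 0 < e -> exists r : R, 1 < r /\ r ^+ N < 1 + e.
Proof.
move=> e0.
have hc := @exprn_continuous R N 1.
have : \forall x \near (1 : R), x ^+ N < 1 + e.
  by apply: (cvgr_lt _ hc); rewrite expr1n ltrDl.
case/nbhs_ballP => d d0 hd; exists (1 + d / 2); split.
  by rewrite ltrDl divr_gt0.
apply: hd; rewrite /ball /= opprD addrA subrr sub0r normrN ger0_norm.
  by rewrite ltr_pdivrMr // ltr_pMr // ltr1n.
by rewrite divr_ge0 // ltW.
Qed.

Lemma asym (V : R -> \bar R) (d : nat) (C : R) : 0 < C ->
  (fun t => (V t * ((t ^+ d)^-1)%:E)%E) @ +oo --> C%:E ->
  forall r, 1 < r -> exists M0, forall t, M0 < t ->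
   [/\ 0 < t, ((C / r * t ^+ d)%:E <= V t)%E & (V t <= (C * r * t ^+ d)%:E)%E].
Proof.
move=> C0 hV r r1.
have r0 : 0 < r by apply: lt_trans r1.
have [hfin hcv] := (fine_cvgP _ _).1 hV.
have h1 : \forall t \near +oo, fine (V t * ((t ^+ d)^-1)%:E)%E < C * r.
  by apply: (cvgr_lt _ hcv); rewrite ltr_pMr.
have h2 : \forall t \near +oo, C / r < fine (V t * ((t ^+ d)^-1)%:E)%E.
  by apply: (cvgr_gt _ hcv); rewrite ltr_pdivrMr // ltr_pMr.
have h0 : \forall t \near +oo, (0 : R) < t.
  by exists 0; split; [exact: num_real | by []].
have [M0 hM] := near_ex (filterI h0 (filterI hfin (filterI h1 h2))).
exists M0 => t /hM [t0 [tf [t1 t2]]].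
have eV : V t = (fine (V t * ((t ^+ d)^-1)%:E) * t ^+ d)%:E.
  rewrite EFinM fineK // -muleA -EFinM mulVf ?mule1 //.
  by rewrite expf_neq0 // gt_eqF.
split => //.
  by rewrite eV lee_fin ler_wpM2r // ?exprn_ge0 ?ltW.
by rewrite eV lee_fin ler_wpM2r // ?exprn_ge0 ?ltW.
Qed.

Lemma arL1 (a b : R) : 0 < a -> 0 < b -> 1 < a + b + 1.
Proof. by move=> *; lra. Qed.
Lemma arL2 (a b : R) : 0 < a -> 0 < b -> a <= a + b + 1 /\ b <= a + b + 1.
Proof. by move=> *; split; lra. Qed.
Lemma arL3 (x y : R) : x < y - 1 -> 1 + x <= y.
Proof. by move=> *; lra. Qed.
Lemma arL4 (e : R) : 0 < e -> 0 < e / 2.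
Proof. by move=> *; lra. Qed.
Lemma arL5 (r : R) : 1 < r -> 0 < r /\ 0 < r - 1.
Proof. by move=> *; split; lra. Qed.

Lemma arL6 (a b s : R) : `|a| + `|b| + 1 < s -> a < s /\ b < s /\ 0 < s.
Proof.
move=> h; have := ler_norm a; have := ler_norm b; have := normr_ge0 a; have := normr_ge0 b.
by move=> *; split; [|split]; lra.
Qed.
Lemma arL7 (s r : R) : 0 < s -> 1 < r -> s < s * r.
Proof. by move=> s0 r1; rewrite ltr_pMr. Qed.
Lemma arL8 (a b L U q e : R) : 0 < L -> L <= a -> b <= U -> U = L * q -> 0 <= q ->
  q < 1 + e / 2 -> 2 * (b - a) / a < e.
Proof.
move=> L0 La bU hU q0 qe.
have a0 : 0 < a by apply: lt_le_trans La.
have h1 : b <= a * q by apply: (le_trans bU); rewrite hU ler_wpM2r.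
have h2 : a * q < a * (1 + e / 2) by rewrite ltr_pM2l.
rewrite ltr_pdivrMr //; lra.
Qed.
Lemma arL9 (C r s : R) d : r != 0 ->
  C * r * (s * r * r) ^+ d = C / r * s ^+ d * r ^+ (d + d).+2.
Proof. by move=> r0; rewrite !exprMn !exprS exprD; field. Qed.
End Main.


Theorem lemma3p4 (R : realType) (k : nat) (n m : {vspace 'M[R]_k})
  (D : R -> set (Mx R k)) (volM : {measure set (Mx R k) -> \bar R}) :
  nil_lie_alg n -> lie_ideal n m -> nicely_growing n D ->
  haar (grp m) volM ->
  forall h : Mx R k, grp m h ->
  forall K : set 'M[R]_k, compact K -> K `<=` grp n ->
  forall e : R, 0 < e ->
  \forall t \near +oo, forall g : Mx R k, K g ->
    let S := [set y | D t (g *m y)] `&` grp m in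
    [/\ (0 < volM S)%E, (volM S < +oo)%E &
        (tv_dist (dirac_conv h (normalized volM S)) (normalized volM S)
           < e%:E)%E].
Proof.
move=> [hnL hnU] [hmn hmI] [[hDm hDinc hDU] hii hiii [al [al1 hal]]] hvol h hh K cK KG e e0.
have [vnull vinv vfin vpos] := hvol.
have mlie : lie_subalg m.
  by move=> x y xm ym; apply: hmI => //; apply: (subvP hmn).
have MG : forall x, grp m x -> grp n x.
  by move=> _ [x xm <-]; exists x => //; apply: (subvP hmn).
have Gunit : forall x, grp n x -> x \in unitmx.
  by move=> _ [x xn <-]; apply: mexp_unit; apply: hnU.
have Ginv : forall x, grp n x -> invmx x = \adj x.
  by move=> _ [x xn <-]; apply: mexp_inv; apply: hnU.
have G1 : grp n 1%:M by exists 0; [exact: mem0v | exact: mexp0].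
have GD : forall x, grp n x -> exists t, 0 < t /\ D t x.
  move=> x Gx; have : (\bigcup_(t in [set t : R | 0 < t]) D t) x by rewrite hDU.
  by case=> t t0 Dx; exists t.
have Gdiv : forall x y, grp n x -> grp n y -> grp n (x *m invmx y).
  move=> x y Gx Gy; have [t1 [t10 Dx]] := GD x Gx; have [t2 [t20 Dy]] := GD y Gy.
  have t1t : 1 < t1 + t2 + 1 by apply: arL1.
  have [l1 l2] := arL2 t10 t20.
  have Dx' : D (t1 + t2 + 1) x by apply: (hDinc t1).
  have Dy' : D (t1 + t2 + 1) y by apply: (hDinc t2).
  have : D (al * (t1 + t2 + 1)) (x *m invmx y).
    by apply: (hal _ t1t); exists x => //; exists y.
  by apply: (hDm _ _).2; apply: mulr_gt0; apply: lt_trans ltr01 _.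
pose K1 : set 'M[R]_k := [set 1%:M] `|` K `|` ((fun g => g *m invmx h) @` K)
   `|` ((fun g => \adj g) @` K) `|` ((fun g => h *m \adj g) @` K).
have cK1 : compact K1.
  have cimg : forall f : 'M[R]_k -> 'M[R]_k, continuous f -> compact (f @` K).
    by move=> f cf; apply: continuous_compact => //; apply: continuous_subspaceT.
  apply: compactU; [apply: compactU; [apply: compactU; [apply: compactU|]|]|].
  - exact: compact_set1.
  - exact: cK.
  - apply: cimg; apply: ec_cont; apply: ec_mul; [apply: ec_id | apply: ec_cst].
  - by apply: cimg; apply: ec_cont; apply: ec_adj; apply: ec_id.
  - apply: cimg; apply: ec_cont; apply: ec_mul; first exact: ec_cst.
    by apply: ec_adj; apply: ec_id.
have nK1 : K1 !=set0 by exists 1%:M; left; left; left; left.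
have K1G : K1 `<=` grp n.
  have hG : grp n h by apply: MG.
  move=> x [[[[->|Kx]|[g Kg <-]]|[g Kg <-]]|[g Kg <-]] //.
  - by apply: KG.
  - by apply: Gdiv => //; apply: KG.
  - by have := Gdiv 1%:M g G1 (KG g Kg); rewrite mul1mx Ginv //; apply: KG.
  - by have := Gdiv h g hG (KG g Kg); rewrite Ginv //; apply: KG.
have [eps [eps0 epslim evK]] := hii K1 cK1 nK1 K1G.
pose d := degN n m.
have [r [r1 rN]] : exists r : R, 1 < r /\ r ^+ (d + d).+2 < 1 + e / 2.
  by apply: choose_r; apply: arL4.
have [r0 r10] := arL5 r1.
have [C [C0 hC]] := hiii m mlie hmn volM hvol.
have [MV hMV] := asym C0 hC r1.
have heps : \forall t \near +oo, eps t < r - 1.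
  by apply: (cvgr_lt _ epslim).
have h0 : \forall t \near +oo, (0 : R) < t.
  by exists 0; split; [exact: num_real | by []].
have [ME hME] := near_ex (filterI h0 (filterI evK heps)).
have up : forall t', ME < t' -> forall g' g'', K1 g' -> K1 g'' -> g'' *m g' = 1%:M ->
    [set y | D t' (g' *m y)] `<=` D (t' * r).
  move=> t' Mt g' g'' K1g' K1g'' e1 y Dy.
  have [t'0 [[_ incU] ept]] := hME t' Mt.
  have : KDK K1 (D t') y.
    exists g'', (g' *m y), 1%:M; split => //; first by left; left; left; left.
    by rewrite mulmx1 mulmxA e1 mul1mx.
  move/incU; apply: hDinc; first by apply: mulr_gt0 => //; apply: addr_gt0 ltr01 (eps0 t').
  by apply: ler_wpM2l; [apply: ltW | apply: arL3].
have low : forall s', ME < s' -> forall g', K1 g' -> D s' `<=` [set y | D (s' * r) (g' *m y)].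
  move=> s' Ms g' K1g' y Dy.
  have [s'0 [[_ incU] eps']] := hME s' Ms.
  have : KDK K1 (D s') (g' *m y).
    by exists g', y, 1%:M; split => //; [left; left; left; left | rewrite mulmx1].
  move/incU; apply: hDinc; first by apply: mulr_gt0 => //; apply: addr_gt0 ltr01 (eps0 s').
  by apply: ler_wpM2l; [apply: ltW | apply: arL3].
exists (r * (`|ME| + `|MV| + 1)); split; first exact: num_real.
move=> t tT g Kg.
set S : set (Mx R k) := [set y | D t (g *m y)] `&` grp m.
have [hs1 [hs2 s0]] : ME < t / r /\ MV < t / r /\ 0 < t / r.
  by apply: arL6; rewrite ltr_pdivlMr // mulrC.
set s := t / r.
have ts : t = s * r by rewrite /s divfK // gt_eqF.
have st : s < t by rewrite ts arL7.
have t0 : 0 < t by apply: lt_trans st.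
have tr : t < t * r by rewrite arL7.
have Mt : ME < t := lt_trans hs1 st.
have MVt : MV < t * r := lt_trans hs2 (lt_trans st tr).
have Kg1 : K1 g by left; left; left; right.
have Gg := KG g Kg.
have hG : grp n h := MG h hh.
have hu : h \in unitmx := Gunit h hG.
have gadj : \adj g *m g = 1%:M by rewrite -Ginv // mulVmx // Gunit.
have K1adj : K1 (\adj g) by left; right; exists g.
have K1gh : K1 (g *m invmx h) by left; left; right; exists g.
have K1hg : K1 (h *m \adj g) by right; exists g.
have ghinv : (h *m \adj g) *m (g *m invmx h) = 1%:M.
  by rewrite -Ginv // !mulmxA -(mulmxA h) mulVmx ?Gunit // mulmx1 mulmxV.
have mG : measurable (grp m : set (Mx R k)) := grp_meas m.
have mS : measurable S.
  by apply: measurableI => //; apply: lmul_meas; apply: (hDm t t0).1.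
set S' : set (Mx R k) := D (t * r) `&` grp m.
have mS' : measurable S'.
  by apply: measurableI => //; apply: (hDm _ (mulr_gt0 t0 r0)).1.
have SS' : S `<=` S'.
  by move=> y [Dy my]; split => //; apply: (up t Mt g (\adj g)).
have lowS : D s `&` grp m `<=` S.
  by move=> y [Dy my]; split => //; rewrite ts; apply: (low s hs1 g Kg1).
have [_ LV _] := hMV s hs2.
have [_ _ UV] := hMV (t * r) MVt.
have mDs : measurable (D s `&` grp m) by apply: measurableI => //; apply: (hDm s s0).1.
have LS : ((C / r * s ^+ d)%:E <= volM S)%E.
  by apply: (le_trans LV); apply: le_measure; rewrite ?inE.
have S'f : (volM S' < +oo)%E by apply: le_lt_trans UV (ltry _).
have Sf : (volM S < +oo)%E.
  by apply: le_lt_trans S'f; apply: le_measure; rewrite ?inE.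
have L0 : 0 < C / r * s ^+ d by rewrite mulr_gt0 ?divr_gt0 // exprn_gt0.
have S0 : (0 < volM S)%E by apply: lt_le_trans LS; rewrite lte_fin.
split => //.
have hS0 : volM (([set h *m x | x in S] : set (Mx R k)) `\` S') = 0%E.
  apply: (subset_measure0 _ (measurableC mG)) => //.
    by apply: measurableD => //; apply: img_meas.
  move=> _ [[y [Dy my] <-] nS'] mhy; apply: nS'; split => //.
  apply: (up t Mt (g *m invmx h) (h *m \adj g)) => //=.
  by rewrite -mulmxA (mulmxA (invmx h)) mulVmx // mul1mx.
have hinv' : forall A : set (Mx R k), measurable A ->
    volM ([set h *m x | x in A] : set (Mx R k)) = volM A.
  by move=> A mA; apply: vinv.
have := tv_bound hu hinv' mS mS' S0 S'f SS' hS0.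
move/le_lt_trans; apply; rewrite lte_fin.
have Sfin : volM S \is a fin_num by rewrite ge0_fin_numE.
have S'fin : volM S' \is a fin_num by rewrite ge0_fin_numE.
apply: (@arL8 R _ _ _ (C * r * (t * r) ^+ d) (r ^+ (d + d).+2) _ L0).
- by rewrite -lee_fin fineK.
- by rewrite -lee_fin fineK.
- by rewrite ts arL9 // gt_eqF.
- by rewrite exprn_ge0 // ltW.
- exact: rN.
Qed.
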